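(* Let $h:[0,\infty)^3\to[0,\infty)$ be upper semicontinuous and nondecreasing in each variable, and set $g(t)=h(t,t,t)$ for $t\ge0$. Then $g(t)<t$ for every $t>0$ if and only if $\lim_{n\to\infty}g^n(t)=0$ for every $t>0$ (where $g^n$ denotes the $n$-th iterate of $g$). *)

(* Defs.v *)
From Stdlib Require Import Reals.
Open Scope R_scope.

(* The closed orthant [0,oo)^3, functions represented curried R -> R -> R -> R;
   only their values on the orthant matter. *)
Definition in_orthant3 (x y z : R) : Prop := 0 <= x /\ 0 <= y /\ 0 <= z.

Definition usc_orthant3 (h : R -> R -> R -> R) : Prop :=
  forall x y z, in_orthant3 x y z ->
  forall eps, 0 < eps -> exists delta, 0 < delta /\
    forall x' y' z', in_orthant3 x' y' z' ->
      Rabs (x' - x) < delta -> Rabs (y' - y) < delta -> Rabs (z' - z) < delta ->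
      h x' y' z' < h x y z + eps.

Definition nondecr_each3 (h : R -> R -> R -> R) : Prop :=
  forall x y z x' y' z', in_orthant3 x y z -> in_orthant3 x' y' z' ->
    x <= x' -> y <= y' -> z <= z' -> h x y z <= h x' y' z'.

Definition nonneg_on_orthant3 (h : R -> R -> R -> R) : Prop :=
  forall x y z, in_orthant3 x y z -> 0 <= h x y z.

(* Main.v *)
Require Import Defs.
From Stdlib Require Import Reals Lra.
Open Scope R_scope.

Theorem lemma1 (h : R -> R -> R -> R) :
  nonneg_on_orthant3 h -> usc_orthant3 h -> nondecr_each3 h ->
  let g := fun t : R => h t t t in
  (forall t, 0 < t -> g t < t) <->
  (forall t, 0 < t -> Un_cv (fun n : nat => Nat.iter n g t) 0).
Proof.
  intros Hnn Husc Hmon g.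
  assert (Gnn : forall x, 0 <= x -> 0 <= g x).
  { intros x Hx. unfold g. apply Hnn. repeat split; lra. }
  assert (Gmon : forall a b, 0 <= a -> a <= b -> g a <= g b).
  { intros a b Ha Hab. unfold g. apply Hmon; repeat split; lra. }
  split.
  - intros Hlt t Ht.
    assert (Gle : forall x, 0 <= x -> g x <= x).
    { intros x Hx. destruct (Rle_lt_or_eq_dec 0 x Hx) as [Hp|H0].
      - left; apply Hlt; exact Hp.
      - subst x. destruct (Rle_dec (g 0) 0) as [|Hn]; [assumption|].
        exfalso. assert (Hs : 0 < g 0 / 2) by lra.
        pose proof (Hlt _ Hs). pose proof (Gmon 0 (g 0 / 2) (Rle_refl 0) (Rlt_le _ _ Hs)).
        lra. }
    set (u := fun n : nat => Nat.iter n g t).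
    assert (Unn : forall n, 0 <= u n).
    { induction n; simpl; [lra|]. apply Gnn. exact IHn. }
    assert (Udec : Un_decreasing u).
    { intro n. change (g (u n) <= u n). apply Gle, Unn. }
    assert (Hlb : has_lb u).
    { exists 0. intros x [i Hi]. unfold opp_seq in Hi. pose proof (Unn i). lra. }
    destruct (decreasing_cv u Udec Hlb) as [l Hl].
    pose proof (decreasing_ineq u l Udec Hl) as Hge.
    assert (Hl0 : 0 <= l).
    { destruct (Rle_dec 0 l) as [|Hn]; [assumption|]. exfalso.
      destruct (Hl (- l)) as [N HN]; [lra|].
      specialize (HN N (le_n N)). unfold Rdist in HN. pose proof (Unn N).
      rewrite Rabs_right in HN; lra. }
    destruct (Rle_lt_or_eq_dec 0 l Hl0) as [Hlp|Hl0'].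
    + exfalso. pose proof (Hlt l Hlp) as Hgl.
      assert (Hin : in_orthant3 l l l) by (repeat split; lra).
      destruct (Husc l l l Hin (l - g l)) as [d [Hd Hdd]]; [lra|].
      destruct (Hl d Hd) as [N HN]. specialize (HN N (le_n N)). unfold Rdist in HN.
      assert (Hin' : in_orthant3 (u N) (u N) (u N)) by (pose proof (Unn N); repeat split; lra).
      specialize (Hdd _ _ _ Hin' HN HN HN).
      specialize (Hge (S N)). change (l <= g (u N)) in Hge. unfold g in Hge, Hdd. lra.
    + rewrite Hl0'. exact Hl.
  - intros Hcv t Ht. destruct (Rlt_dec (g t) t) as [|Hn]; [assumption|]. exfalso.
    assert (Hge : forall n, t <= Nat.iter n g t).
    { induction n; simpl; [lra|]. pose proof (Gmon t _ (Rlt_le _ _ Ht) IHn). lra. }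
    destruct (Hcv t Ht t Ht) as [N HN]. specialize (HN N (le_n N)). unfold Rdist in HN.
    specialize (Hge N). rewrite Rminus_0_r, Rabs_right in HN; lra.
Qed.
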